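(* Let $(d_1,d_2)\in\mathbb N^2$, let $(a,b)\in\mathbb N^2$ be coprime and $k\ge1$ an integer, with $b>0$ and $d_2>0$. If \[ \frac{kab+1}{kb^2}\ge\frac{d_1}{d_2}>\frac ab\qquad\text{or}\qquad\frac{ka^2}{kab+1}\le\frac{d_1}{d_2}<\frac ab, \] then $(d_1,d_2)$ and $(ka,kb)$ satisfy the one-bending property.
   Context: Rank-2 scattering diagram: $\Bbbk$ a field of characteristic $0$, $M=\mathbb Z^2$ with basis $e_1,e_2$, $N=\operatorname{Hom}(M,\mathbb Z)$; positive integers $\ell_1,\ell_2$; independent variables $p_{i,k}$ ($i=1,2$, $1\le k\le\ell_i$); $\mathcal M$ the monoid of monomials in them; $\widehat R$ the completion of $\Bbbk[\mathcal M][x^{\pm1},y^{\pm1}]$ at the ideal generated by the $p_{i,k}$; $x^{(m_1,m_2)}=x^{m_1}y^{m_2}$. Walls: rays $b-\mathbb R_{\ge0}m_0$ or lines $b-\mathbb Rm_0$ ($m_0$ primitive) with functions $1+\sum_{k\ge1}c_kx^{km_0}$, $c_k$ in that ideal; crossing with velocity $v$ acts by $x^m\mapsto x^mf^{\langle n,m\rangle}$ ($n\in N$ primitive orthogonal to the wall, $\langle n,v\rangle<0$); consistency: trivial path-ordered products around regular loops. $\mathfrak D=\operatorname{Scat}(P_1,P_2)$, $P_1=1+\sum_{k=1}^{\ell_1}p_{1,k}x^k$, $P_2=1+\sum_{k=1}^{\ell_2}p_{2,k}y^k$: the consistent diagram (unique up to equivalence) consisting of the lines $(\mathbb Re_1,P_1)$,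 $(\mathbb Re_2,P_2)$ and rays, chosen with rays $\mathbb R_{\le0}(a,b)$ for distinct coprime $(a,b)\in\mathbb Z_{>0}^2$. A broken line for $m_0\in M\setminus\{0\}$ with endpoint $Q$ is a continuous piecewise linear $\beta:(-\infty,0]\to\mathbb R^2$ avoiding ray endpoints and wall intersection points, with breakpoints $\tau_1<\dots<\tau_\ell<0$ and monomials $c_ix^{m_i}$ on the linear pieces, $c_0=1$, $\beta(0)=Q$, $\dot\beta=-m_i$ on the $i$-th piece, transversal crossing at breakpoints, and $c_ix^{m_i}$ a term different from $c_{i-1}x^{m_{i-1}}$ of $c_{i-1}x^{m_{i-1}}\prod_{\mathfrak d\ni\beta(\tau_i)}f_{\mathfrak d}^{\langle n,m_{i-1}\rangle}$ ($n$ primitive normal with $\langle n,m_{i-1}\rangle>0$); it bends at the $\beta(\tau_i)$, its initial exponent is $m_0$ and final exponent $m_\ell$. One-bending property: for $(d_1,d_2)\in\mathbb N^2$, coprime $(a,b)\in\mathbb N^2$ with $d_1b-d_2a\ne0$ and $k\ge1$, $(d_1,d_2)$ and $(ka,kb)$ satisfy the one-bending property if every broken line in $\mathfrak D$ with initial exponent $(-d_1,-d_2)$, final exponent $(ka-d_1,kb-d_2)$, and no bend on the positive $x$-axis or positive $y$-axis, has exactly one bend. *)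

(* Defs.v *)
From HB Require Import structures.
From mathcomp Require Import all_boot all_order all_algebra.
From mathcomp Require Import reals.
From mathcomp Require Import mpoly.

Set Implicit Arguments.
Unset Strict Implicit.
Unset Printing Implicit Defensive.

Import Order.TTheory GRing.Theory Num.Theory.
Local Open Scope ring_scope.

(* Coefficients.  The variables p_{i,k} are numbered 0 .. l1+l2-1 :         *)
(*   p_{1,k} |-> k-1        (1 <= k <= l1)                                   *)
(*   p_{2,k} |-> l1 + k-1   (1 <= k <= l2)                                   *)
(* k[M] = {mpoly k[n]}, its completion at the ideal (p) is the ring of       *)
(* formal power series, represented by its coefficient function.           *)

Definition ps (k : fieldType) (n : nat) := 'X_{1..n} -> k.

(* the j-th variable (0 if j >= n) *)
Definition pX (k : fieldType) (n j : nat) : {mpoly k[n]} :=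
  \sum_(i < n | val i == j) 'X_i.

Arguments pX : clear implicits.

Definition ps_of (k : fieldType) (n : nat) (q : {mpoly k[n]}) : ps k n :=
  fun al => q@_al.

Definition ps1 (k : fieldType) (n : nat) : ps k n :=
  fun al => if al == 0%MM then 1 else 0.

Arguments ps1 : clear implicits.

Definition ps_nonzero (k : fieldType) (n : nat) (s : ps k n) : Prop :=
  exists al, s al != 0.

(* truncation modulo I^N, I = (p_{i,k}) *)
Definition trunc (k : fieldType) (n : nat) (N : nat) (s : ps k n) : {mpoly k[n]} :=
  \sum_(m : 'X_{1..n < N}) s m *: 'X_[m].

Definition psmul (k : fieldType) (n : nat) (s t : ps k n) : ps k n :=
  fun al => (trunc (mdeg al).+1 s * trunc (mdeg al).+1 t)@_al.

(* A wall function 1 + sum_{j>=1} g j x^{j m0} is encoded by g : nat -> ps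
   (g 0 is ignored).  [wcoef g e j] is the coefficient of x^{j m0} in
   (1 + sum_{j>=1} g j x^{j m0}) ^ e, as a power series in the p's. *)
Definition wcoef (k : fieldType) (n : nat) (g : nat -> ps k n) (e j : nat)
  : ps k n :=
  fun al =>
    ((1 + \sum_(1 <= i < j.+1) (trunc (mdeg al).+1 (g i))%:P * 'X^i) ^+ e)`_j
      @_al.

(* coefficient sequences of P1 = 1 + sum p_{1,i} x^i and P2 = 1 + sum p_{2,i} y^i *)
Definition gP1 (k : fieldType) (l1 l2 : nat) : nat -> ps k (l1 + l2) :=
  fun i => ps_of (if (0 < i <= l1)%N then pX k (l1 + l2) i.-1 else 0).

Definition gP2 (k : fieldType) (l1 l2 : nat) : nat -> ps k (l1 + l2) :=
  fun i => ps_of (if (0 < i <= l2)%N then pX k (l1 + l2) (l1 + i.-1) else 0).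

Arguments gP1 : clear implicits.
Arguments gP2 : clear implicits.

(* The diagram.  The lines (R e1, P1), (R e2, P2) and, for every coprime     *)
(* (a,b) in Z_{>0}^2, the ray R_{<=0}(a,b) with function                     *)
(*    f_{(a,b)} = 1 + sum_{j>=1} F a b j x^{j(a,b)}                           *)
(* (a ray with all F a b j = 0 is the trivial wall, i.e. no wall).           *)

Definition coprime_pos (a b : nat) : bool := [&& 0 < a, 0 < b & coprime a b]%N.

Definition bound_ok (k : fieldType) (n : nat) (F : nat -> nat -> nat -> ps k n)
  (N B : nat) : Prop :=
  forall a b j, coprime_pos a b -> (0 < j)%N -> (B < j * (a + b))%N ->
    forall al : 'X_{1..n}, (mdeg al < N)%N -> F a b j al = 0.

(* Laurent-free model of R^ / I^N: the relevant automorphisms preserve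
   k[p][x,y]; B := {mpoly {mpoly k[n]}[2]}, x = 'X_0, y = 'X_1.            *)
Definition mx (k : fieldType) (n : nat) : {mpoly {mpoly k[n]}[2]} :=
  'X_(@Ordinal 2 0 isT).
Definition my (k : fieldType) (n : nat) : {mpoly {mpoly k[n]}[2]} :=
  'X_(@Ordinal 2 1 isT).

Arguments mx : clear implicits.
Arguments my : clear implicits.

Definition wfun (k : fieldType) (n : nat) (g : nat -> ps k n) (a b N J : nat)
  : {mpoly {mpoly k[n]}[2]} :=
  1 + \sum_(1 <= j < J.+1)
        trunc N (g j) *: (mx k n ^+ (j * a) * my k n ^+ (j * b)).

(* inverse modulo I^N of a function f = 1 mod I *)
Definition inv_mod (k : fieldType) (n : nat) (N : nat)
  (f : {mpoly {mpoly k[n]}[2]}) : {mpoly {mpoly k[n]}[2]} :=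
  \sum_(r < N) (1 - f) ^+ r.

Definition zpow (k : fieldType) (n : nat) (N : nat)
  (f : {mpoly {mpoly k[n]}[2]}) (e : int) : {mpoly {mpoly k[n]}[2]} :=
  match e with
  | Posz m => f ^+ m
  | Negz m => inv_mod N f ^+ m.+1
  end.

(* A crossing of a wall with function f and normal nv (primitive, orthogonal
   to the wall, <nv, velocity> < 0): x^m |-> x^m f^<nv,m>.  It is recorded by
   the images of x and y. *)
Definition crossing (k : fieldType) (n : nat) (N : nat)
  (f : {mpoly {mpoly k[n]}[2]}) (nv : int * int)
  : {mpoly {mpoly k[n]}[2]} * {mpoly {mpoly k[n]}[2]} :=
  (mx k n * zpow N f nv.1, my k n * zpow N f nv.2).

(* the coprime (a,b) with 1 <= a,b <= B, by increasing slope b/a, i.e. in the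
   order in which a counterclockwise loop crosses the rays R_{<=0}(a,b) *)
Definition rays_upto (B : nat) : seq (nat * nat) :=
  sort (fun u v : nat * nat => (u.2 * v.1 <= v.2 * u.1)%N)
    [seq ab <- [seq (a, b) | a <- iota 1 B, b <- iota 1 B]
       | coprime_pos ab.1 ab.2].

(* the walls crossed, in order, by a small counterclockwise loop around the
   origin starting just below the positive x-axis *)
Definition loop_crossings (k : fieldType) (l1 l2 : nat)
  (F : nat -> nat -> nat -> ps k (l1 + l2)) (N B : nat)
  : seq ({mpoly {mpoly k[l1 + l2]}[2]} * (int * int)) :=
  let P1 := wfun (gP1 k l1 l2) 1 0 N l1 in
  let P2 := wfun (gP2 k l1 l2) 0 1 N l2 in
  [:: (P1, (0%Z, (-1)%Z)); (P2, (1%Z, 0%Z)); (P1, (0%Z, 1%Z))]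
  ++ [seq (wfun (F ab.1 ab.2) ab.1 ab.2 N B, ((- (ab.2%:Z))%R, ab.1%:Z))
       | ab <- rays_upto B]
  ++ [:: (P2, ((-1)%Z, 0%Z))].

(* path-ordered product theta_r o ... o theta_1, given by images of x, y *)
Definition path_product (k : fieldType) (l1 l2 : nat)
  (F : nat -> nat -> nat -> ps k (l1 + l2)) (N B : nat)
  : {mpoly {mpoly k[l1 + l2]}[2]} * {mpoly {mpoly k[l1 + l2]}[2]} :=
  foldl (fun im fnv =>
           let t := crossing N fnv.1 fnv.2 in
           (im.1 \mPo [tuple t.1; t.2], im.2 \mPo [tuple t.1; t.2]))
        (mx k (l1 + l2), my k (l1 + l2)) (loop_crossings F N B).

Definition eqmod (k : fieldType) (n : nat) (N : nat)
  (P Q : {mpoly {mpoly k[n]}[2]}) : Prop :=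
  forall (m : 'X_{1..2}) (al : 'X_{1..n}), (mdeg al < N)%N ->
    (P@_m)@_al = (Q@_m)@_al.

(* F describes Scat(P1,P2): a scattering diagram (coefficients in the ideal,
   finitely many nontrivial walls modulo each I^N) which is consistent. *)
Definition is_Scat (k : fieldType) (l1 l2 : nat)
  (F : nat -> nat -> nat -> ps k (l1 + l2)) : Prop :=
  [/\ (forall a b j, coprime_pos a b -> (0 < j)%N -> F a b j 0%MM = 0),
      (forall N, exists B, bound_ok F N B) &
      (forall N B, bound_ok F N B ->
         eqmod N (path_product F N B).1 (mx _ _) /\
         eqmod N (path_product F N B).2 (my _ _))].

Inductive wall := Line1 | Line2 | Ray of nat & nat.

Definition on_wall (R : realType) (w : wall) (q : R * R) : Prop :=
  match w with
  | Line1 => q.2 = 0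
  | Line2 => q.1 = 0
  | Ray a b => coprime_pos a b /\
               exists s : R, 0 <= s /\ q = (- (s * a%:R), - (s * b%:R))
  end.

Definition wall_dir (w : wall) : int * int :=
  match w with
  | Line1 => (1%Z, 0%Z)
  | Line2 => (0%Z, 1%Z)
  | Ray a b => (a%:Z, b%:Z)
  end.

Definition wall_g (k : fieldType) (l1 l2 : nat)
  (F : nat -> nat -> nat -> ps k (l1 + l2)) (w : wall) : nat -> ps k (l1 + l2) :=
  match w with
  | Line1 => gP1 k l1 l2
  | Line2 => gP2 k l1 l2
  | Ray a b => F a b
  end.

(* |<n, m>| for n a primitive normal vector to the wall *)
Definition wall_pair (w : wall) (m : int * int) : nat :=
  absz ((wall_dir w).1 * m.2 - (wall_dir w).2 * m.1)%R.

(* the bending rule at a point q: c' x^{m'} is a term, different from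
   c x^m, of  c x^m f_w^{<n,m>}  where w is the wall through q and
   <n,m> > 0 (transversal crossing) *)
Definition bend_ok (R : realType) (k : fieldType) (l1 l2 : nat)
  (F : nat -> nat -> nat -> ps k (l1 + l2)) (q : R * R)
  (m : int * int) (c : ps k (l1 + l2)) (m' : int * int) (c' : ps k (l1 + l2))
  : Prop :=
  exists (w : wall) (j : nat),
    [/\ on_wall w q, (0 < wall_pair w m)%N /\ (0 < j)%N,
        m' = (m.1 + j%:Z * (wall_dir w).1, m.2 + j%:Z * (wall_dir w).2),
        c' = psmul c (wcoef (wall_g F w) (wall_pair w m) j) &
        ps_nonzero c'].

(* t lies in the closure of the i-th linear piece (i = 0 .. size tau) *)
Definition in_piece (R : realType) (tau : seq R) (i : nat) (t : R) : Prop :=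
  [/\ t <= 0,
      (i = 0%N \/ nth 0 tau i.-1 <= t) &
      (i = size tau \/ t <= nth 0 tau i)].

(* beta : (-oo,0] -> R^2 (values for t > 0 are irrelevant) is a broken line
   for m0 with endpoint Q, breakpoints tau, exponents ms = [m_0;..;m_l] and
   coefficients cs = [c_0;..;c_l]. *)
Definition broken_line (R : realType) (k : fieldType) (l1 l2 : nat)
  (F : nat -> nat -> nat -> ps k (l1 + l2)) (m0 : int * int) (Q : R * R)
  (beta : R -> R * R) (tau : seq R) (ms : seq (int * int))
  (cs : seq (ps k (l1 + l2))) : Prop :=
  [/\ m0 <> (0%Z, 0%Z),
      [/\ size ms = (size tau).+1, size cs = (size tau).+1,
          nth m0 ms 0 = m0 & nth (ps1 _ _) cs 0 = ps1 _ _],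
      [/\ sorted <%R tau, all (fun t => t < 0) tau & beta 0 = Q],
      (forall i t s, (i <= size tau)%N -> in_piece tau i t -> in_piece tau i s ->
         beta t = ((beta s).1 - (t - s) * (nth m0 ms i).1%:~R,
                   (beta s).2 - (t - s) * (nth m0 ms i).2%:~R)) &
      (* avoids ray endpoints and intersection points of walls (= origin) *)
      (forall t, t <= 0 -> beta t <> (0, 0)) /\
      (forall i, (i < size tau)%N ->
         bend_ok F (beta (nth 0 tau i))
           (nth m0 ms i) (nth (ps1 _ _) cs i)
           (nth m0 ms i.+1) (nth (ps1 _ _) cs i.+1))].

Definition one_bending (R : realType) (k : fieldType) (l1 l2 : nat)
  (F : nat -> nat -> nat -> ps k (l1 + l2)) (d1 d2 a b kk : nat) : Prop :=
  forall (Q : R * R) (beta : R -> R * R) (tau : seq R) (ms : seq (int * int))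
         (cs : seq (ps k (l1 + l2))),
    broken_line F (- (d1%:Z), - (d2%:Z)) Q beta tau ms cs ->
    last (- (d1%:Z), - (d2%:Z)) ms
      = ((kk * a)%:Z - d1%:Z, (kk * b)%:Z - d2%:Z) ->
    (forall i, (i < size tau)%N ->
       ~ ((beta (nth 0 tau i)).2 = 0 /\ 0 < (beta (nth 0 tau i)).1) /\
       ~ ((beta (nth 0 tau i)).1 = 0 /\ 0 < (beta (nth 0 tau i)).2)) ->
    size tau = 1%N.

(* Main.v *)
Require Import Defs.
From HB Require Import structures.
From mathcomp Require Import all_boot all_order all_algebra.
From mathcomp Require Import reals.
From mathcomp Require Import mpoly.
From mathcomp Require Import boolp.
From mathcomp Require Import zify ring lra.
Import Order.TTheory GRing.Theory Num.Theory.
Local Open Scope ring_scope.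
Definition det (x y : int * int) : int := x.1 * y.2 - x.2 * y.1.

Lemma frac_le (x y z w : nat) : (0 < y)%N -> (0 < w)%N ->
  (x%:R / y%:R <= z%:R / w%:R :> rat) = (x * w <= z * y)%N.
Proof.
move=> hy hw; rewrite ler_pdivrMr ?ltr0n // mulrAC ler_pdivlMr ?ltr0n //.
by rewrite -!natrM ler_nat.
Qed.

Lemma frac_lt (x y z w : nat) : (0 < y)%N -> (0 < w)%N ->
  (x%:R / y%:R < z%:R / w%:R :> rat) = (x * w < z * y)%N.
Proof.
move=> hy hw; rewrite ltr_pdivrMr ?ltr0n // mulrAC ltr_pdivlMr ?ltr0n //.
by rewrite -!natrM ltr_nat.
Qed.

Lemma det_trans (x1 x2 y1 y2 z1 z2 : int) :
  0 <= x1 -> 0 <= x2 -> 0 <= y1 -> 0 <= y2 -> 0 <= z1 -> 0 <= z2 ->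
  0 < x1 + x2 -> 0 < z1 + z2 ->
  0 < x1 * y2 - x2 * y1 -> 0 < y1 * z2 - y2 * z1 -> 0 < x1 * z2 - x2 * z1.
Proof.
move=> *.
have e : (x1 * y2 - x2 * y1) * z2 + (y1 * z2 - y2 * z1) * x2 = (x1 * z2 - x2 * z1) * y2 by ring.
have e' : (x1 * y2 - x2 * y1) * z1 + (y1 * z2 - y2 * z1) * x1 = (x1 * z2 - x2 * z1) * y1 by ring.
nia.
Qed.

Lemma final_arith (d1 d2 a b kk p q j0 : int) :
  0 <= d1 -> 0 < d2 -> 0 <= a -> 0 < b -> 0 < kk -> 0 < j0 ->
  0 <= p -> 0 <= q -> 0 < p + q ->
  0 <= kk * a - j0 * p -> 0 <= kk * b - j0 * q ->
  q * d1 - p * d2 != 0 ->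
  0 < (q * d1 - p * d2) * (kk * (p * b - q * a)) ->
  ((d1 * (kk * (b * b)) <= (kk * a * b + 1) * d2) /\ (a * d2 < d1 * b)) \/
  ((kk * (a * a) * d2 <= d1 * (kk * a * b + 1)) /\ (d1 * b < a * d2)) -> False.
Proof.
move=> hd1 hd2 ha hb hk hj hp hq hpq h1 h2 hD hpos [[c1 c2]|[c1 c2]].
- have [hDp|hDn] : 0 < q * d1 - p * d2 \/ q * d1 - p * d2 < 0 by lia.
  + have e1 : 1 <= p * b - q * a.
      by move: hpos; rewrite pmulr_rgt0 // pmulr_rgt0 //; lia.
    have eq1 : q * (b * d1 - a * d2) = (p * b - q * a) * d2 + b * (q * d1 - p * d2) by ring.
    have hkd : kk * b * (b * d1 - a * d2) <= d2.
      have -> : kk * b * (b * d1 - a * d2) = d1 * (kk * (b * b)) - (kk * a * b + 1) * d2 + d2 by ring.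
      lia.
    have hq' : q <= kk * b by nia.
    nia.
  + have e1 : 1 <= q * a - p * b.
      by move: hpos; rewrite nmulr_rgt0 // pmulr_rlt0 //; lia.
    have eq1 : (a * q - b * p) * d2 + (p * d2 - q * d1) * b = (a * d2 - b * d1) * q by ring.
    nia.
- have [hDp|hDn] : 0 < q * d1 - p * d2 \/ q * d1 - p * d2 < 0 by lia.
  + have e1 : 1 <= p * b - q * a.
      by move: hpos; rewrite pmulr_rgt0 // pmulr_rgt0 //; lia.
    have eq1 : (d1 * q - d2 * p) * b + (p * b - q * a) * d2 = (d1 * b - d2 * a) * q by ring.
    nia.
  + have e1 : 1 <= q * a - p * b.
      by move: hpos; rewrite nmulr_rgt0 // pmulr_rlt0 //; lia.
    have eq1 : p * (a * d2 - b * d1) = a * (p * d2 - q * d1) + d1 * (q * a - p * b) by ring.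
    have hkd : kk * a * (a * d2 - b * d1) <= d1.
      have -> : kk * a * (a * d2 - b * d1) = kk * (a * a) * d2 - d1 * (kk * a * b + 1) + d1 by ring.
      lia.
    have hp' : p <= kk * a by nia.
    have ha' : 0 < a by nia.
    nia.
Qed.
Lemma sign_tr (A B C : int) : 0 < A * B -> 0 < B * C -> 0 < A * C.
Proof. move=> h1 h2; nia. Qed.

Lemma seq_arith (l : nat) (u : nat -> int * int) (j : nat -> int)
  (m : nat -> int * int) (d1 d2 a b kk : int) :
  (2 <= l)%N ->
  (forall i, (i < l)%N -> [/\ 0 <= (u i).1, 0 <= (u i).2 & 0 < (u i).1 + (u i).2]) ->
  (forall i, (i < l)%N -> 0 < j i) ->
  (forall i, (i < l)%N -> m i.+1 = ((m i).1 + j i * (u i).1, (m i).2 + j i * (u i).2)) ->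
  (forall i, (i < l)%N -> det (u i) (m i) != 0) ->
  (forall i, (i.+1 < l)%N -> 0 < det (u i) (m i) * det (u i.+1) (m i.+1)) ->
  (forall i, (i.+1 < l)%N -> 0 < det (u i) (m i) * det (u i) (u i.+1)) ->
  m 0%N = (- d1, - d2) -> m l = (kk * a - d1, kk * b - d2) ->
  0 <= d1 -> 0 < d2 -> 0 <= a -> 0 < b -> 0 < kk ->
  ((d1 * (kk * (b * b)) <= (kk * a * b + 1) * d2) /\ (a * d2 < d1 * b)) \/
  ((kk * (a * a) * d2 <= d1 * (kk * a * b + 1)) /\ (d1 * b < a * d2)) -> False.
Proof.
move=> hl Hu Hj Hm HD HDD HDE Hm0 Hml hd1 hd2 ha hb hk Hc.
set D0 := det (u 0%N) (m 0%N).
have claim : forall i, (0 < i)%N -> (i < l)%N ->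
  [/\ 0 < D0 * det (u i) (m i), 0 < D0 * det (u 0%N) (u i),
     0 < D0 * det (u 0%N) ((m i.+1).1 - (m 1%N).1, (m i.+1).2 - (m 1%N).2),
     0 <= (m i.+1).1 - (m 1%N).1 & 0 <= (m i.+1).2 - (m 1%N).2].
  elim=> [|i IH]; first by [].
  move=> _ hi.
  case: i IH hi => [|i] IH hi.
  1-2: have [u1 u2 u3] := Hu _ hi.
  1-2: have hji := Hj _ hi.
  1-2: have Hmi := Hm _ hi.
    have h1 := HDD 0%N hi; have h2 := HDE 0%N hi.
    split => //.
    - move: h2; rewrite Hmi /det /= /D0 => h2.
      have -> : (u 0%N).1 * ((m 1%N).2 + j 1%N * (u 1%N).2 - (m 1%N).2) -
        (u 0%N).2 * ((m 1%N).1 + j 1%N * (u 1%N).1 - (m 1%N).1) =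
        j 1%N * ((u 0%N).1 * (u 1%N).2 - (u 0%N).2 * (u 1%N).1) by ring.
      by rewrite mulrCA pmulr_rgt0.
    - rewrite Hmi /=; nia.
    - rewrite Hmi /=; nia.
  have [c1 c2 c3 c4 c5] := IH isT (ltnW hi).
  have h1 := HDD i.+1 hi; have h2 := HDE i.+1 hi.
  have n1 : 0 < D0 * det (u i.+2) (m i.+2) by apply: sign_tr c1 h1.
  have n2 : 0 < D0 * det (u 0%N) (u i.+2).
    have s3 : 0 < D0 * det (u i.+1) (u i.+2) by apply: sign_tr c1 h2.
    have [v1 v2 v3] := Hu 0%N (ltn_trans (ltn0Sn _) hi).
    have [w1 w2 w3] := Hu i.+1 (ltnW hi).
    move: c2 s3; rewrite /det.
    have [hD|hD] : 0 < D0 \/ D0 < 0.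
      have := HD 0%N (ltn_trans (ltn0Sn _) hi); rewrite -/D0; lia.
    + rewrite !pmulr_rgt0 // => c2 s3.
      exact: (det_trans _ _ _ _ _ _ v1 v2 w1 w2 u1 u2 v3 u3 c2 s3).
    + rewrite !nmulr_rgt0 // => c2 s3.
      have := det_trans _ _ _ _ _ _ u1 u2 w1 w2 v1 v2 u3 v3.
      move=> /(_ ltac:(lia) ltac:(lia)); lia.
  split => //.
  - move: c3; rewrite Hmi /det /= => c3.
    move: n2; rewrite /det => n2.
    have -> : (u 0%N).1 * ((m i.+2).2 + j i.+2 * (u i.+2).2 - (m 1%N).2) -
        (u 0%N).2 * ((m i.+2).1 + j i.+2 * (u i.+2).1 - (m 1%N).1) =
      ((u 0%N).1 * ((m i.+2).2 - (m 1%N).2) - (u 0%N).2 * ((m i.+2).1 - (m 1%N).1))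
      + j i.+2 * ((u 0%N).1 * (u i.+2).2 - (u 0%N).2 * (u i.+2).1) by ring.
    rewrite mulrDr; apply: addr_gt0 => //.
    by rewrite mulrCA pmulr_rgt0.
  - rewrite Hmi /=; nia.
  - rewrite Hmi /=; nia.
have [c1 c2 c3 c4 c5] := claim l.-1 ltac:(lia) ltac:(lia).
have el : l.-1.+1 = l by lia.
rewrite el Hml (Hm 0%N ltac:(lia)) Hm0 /= in c3 c4 c5.
have [v1 v2 v3] := Hu 0%N ltac:(lia).
have hj0 := Hj 0%N ltac:(lia).
have hD0 := HD 0%N ltac:(lia).
move: hD0 c3; rewrite -/D0 /D0 /det Hm0 /= => hD0 c3.
apply: (final_arith _ _ _ _ _ _ _ _ hd1 hd2 ha hb hk hj0 v1 v2 v3 _ _ _ _ Hc).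
- lia.
- lia.
- move: hD0; apply: contra => /eqP h; apply/eqP; lia.
- move: c3.
  have -> : (u 0%N).1 * (- d2) - (u 0%N).2 * (- d1) = (u 0%N).2 * d1 - (u 0%N).1 * d2 by ring.
  have -> : (u 0%N).1 * (kk * b - d2 - (- d2 + j 0%N * (u 0%N).2)) -
      (u 0%N).2 * (kk * a - d1 - (- d1 + j 0%N * (u 0%N).1)) =
      kk * ((u 0%N).1 * b - (u 0%N).2 * a) by ring.
  done.
Qed.
Lemma geo (R : realType) (u v m : int * int) (s s' t : R) :
  0 < s -> 0 < s' -> 0 < t -> det u m != 0 ->
  -(s' * v.1%:~R) = -(s * u.1%:~R) - t * m.1%:~R ->
  -(s' * v.2%:~R) = -(s * u.2%:~R) - t * m.2%:~R ->
  0 < det u m * det v m /\ 0 < det u m * det u v.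
Proof.
move=> hs hs' ht hD e1 e2.
rewrite -!(ltr0z R) /det !intrM !intrB !intrM.
move: hD; rewrite -(intr_eq0 R) /det intrB !intrM.
set U1 := (u.1)%:~R; set U2 := (u.2)%:~R; set V1 := (v.1)%:~R; set V2 := (v.2)%:~R.
set M1 := (m.1)%:~R; set M2 := (m.2)%:~R.
move: e1 e2; rewrite -/U1 -/U2 -/V1 -/V2 -/M1 -/M2 => e1 e2 hD.
have k1 : s' * (V1 * M2 - V2 * M1) = s * (U1 * M2 - U2 * M1).
  have -> : s' * (V1 * M2 - V2 * M1) = (s' * V1) * M2 - (s' * V2) * M1 by ring.
  have -> : s' * V1 = s * U1 + t * M1 by lra.
  have -> : s' * V2 = s * U2 + t * M2 by lra.
  ring.
have k2 : s' * (U1 * V2 - U2 * V1) = t * (U1 * M2 - U2 * M1).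
  have -> : s' * (U1 * V2 - U2 * V1) = U1 * (s' * V2) - U2 * (s' * V1) by ring.
  have -> : s' * V1 = s * U1 + t * M1 by lra.
  have -> : s' * V2 = s * U2 + t * M2 by lra.
  ring.
set D := U1 * M2 - U2 * M1 in hD k1 k2 *.
have hD2 : 0 < D * D.
  move: hD; rewrite neq_lt => /orP [h|h]; nra.
split; nra.
Qed.
Theorem lemma5p11 (R : realType) (k : fieldType) (hk : [pchar k] =i pred0)
  (l1 l2 : nat) (hl1 : (0 < l1)%N) (hl2 : (0 < l2)%N)
  (F : nat -> nat -> nat -> ps k (l1 + l2)) (HF : is_Scat F)
  (d1 d2 a b kk : nat) (hab : coprime a b) (hkk : (1 <= kk)%N)
  (hb : (0 < b)%N) (hd2 : (0 < d2)%N) :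
  ((d1%:R / d2%:R <= (kk * a * b + 1)%:R / (kk * b ^ 2)%:R :> rat) /\
   (a%:R / b%:R < d1%:R / d2%:R :> rat)) \/
  (((kk * a ^ 2)%:R / (kk * a * b + 1)%:R <= d1%:R / d2%:R :> rat) /\
   (d1%:R / d2%:R < a%:R / b%:R :> rat)) ->
  one_bending R F d1 d2 a b kk.
Proof.
move=> Hc Q beta tau ms cs HBL Hlast Hpos.
case: HBL => Hm0 [Hsms Hscs Hms0 Hcs0] [Hsort Hneg HQ] Hpiece [Hnz Hbend].
set m0 := (- (d1%:Z), - (d2%:Z)) in Hm0 Hms0 Hlast Hpiece Hbend *.
have Htneg : forall i, (i < size tau)%N -> nth 0 tau i < 0.
  by move=> i hi; exact: (all_nthP 0 Hneg i hi).
have Hdata : forall i, (i < size tau)%N -> exists x : (int * int) * nat * R,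
   [/\ [/\ 0 <= x.1.1.1, 0 <= x.1.1.2 & 0 < x.1.1.1 + x.1.1.2], (0 < x.1.2)%N,
       nth m0 ms i.+1 = ((nth m0 ms i).1 + (x.1.2)%:Z * x.1.1.1,
                         (nth m0 ms i).2 + (x.1.2)%:Z * x.1.1.2),
       det x.1.1 (nth m0 ms i) != 0 &
       0 < x.2 /\ beta (nth 0 tau i) = (-(x.2 * (x.1.1.1)%:~R), -(x.2 * (x.1.1.2)%:~R))].
  move=> i hi.
  have [w [jj [Hon [Hwp Hj] Hm' _ _]]] := Hbend i hi.
  have [hpx hpy] := Hpos i hi.
  have hq0 : beta (nth 0 tau i) <> (0, 0) by apply: Hnz; apply: ltW; apply: Htneg.
  move: Hon hpx hpy hq0; case: (beta (nth 0 tau i)) => x y /= Hon hpx hpy hq0.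
  case: w Hon Hwp Hm' => [|| a' b'] /= Hon Hwp Hm'.
  - exists ((1%Z, 0%Z), jj, - x) => /=; split => //.
      by rewrite -absz_gt0.
    subst y.
    have hx : x < 0.
      rewrite ltNge le_eqVlt; apply/negP => /orP [/eqP hx|hx].
        by apply: hq0; rewrite hx.
      by apply: hpx.
    split; first by rewrite oppr_gt0.
    by rewrite mulr1 mulr0 opprK oppr0.
  - exists ((0%Z, 1%Z), jj, - y) => /=; split => //.
      by rewrite -absz_gt0.
    subst x.
    have hy : y < 0.
      rewrite ltNge le_eqVlt; apply/negP => /orP [/eqP hy|hy].
        by apply: hq0; rewrite hy.
      by apply: hpy.
    split; first by rewrite oppr_gt0.
    by rewrite mulr1 mulr0 opprK oppr0.
  - case: Hon => /and3P [ha' hb' _] [s [hs [hx hy]]]; subst x y.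
    exists ((a'%:Z, b'%:Z), jj, s) => /=; split => //.
    + split; lia.
    + by rewrite -absz_gt0.
    + split => //.
      rewrite lt_neqAle hs andbT; apply/negP => /eqP hs0.
      by apply: hq0; rewrite -hs0 !mul0r oppr0.
have [f Hf] := @choice _ _ (fun i (x : (int * int) * nat * R) => (i < size tau)%N ->
   [/\ [/\ 0 <= x.1.1.1, 0 <= x.1.1.2 & 0 < x.1.1.1 + x.1.1.2], (0 < x.1.2)%N,
       nth m0 ms i.+1 = ((nth m0 ms i).1 + (x.1.2)%:Z * x.1.1.1,
                         (nth m0 ms i).2 + (x.1.2)%:Z * x.1.1.2),
       det x.1.1 (nth m0 ms i) != 0 &
       0 < x.2 /\ beta (nth 0 tau i) = (-(x.2 * (x.1.1.1)%:~R), -(x.2 * (x.1.1.2)%:~R))])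
  ltac:(move=> i; case: (ltnP i (size tau)) => hi;
        [ have [x hx] := Hdata i hi; exists x => _; exact: hx
        | exists ((0%Z, 0%Z), 0%N, 0); move=> h; exfalso; rewrite ltnNge hi in h; done]).
have Hlast' : nth m0 ms (size tau) = ((kk * a)%:Z - d1%:Z, (kk * b)%:Z - d2%:Z).
  by rewrite -Hlast -nth_last Hsms.
case El: (size tau) => [|[|l']] //.
  exfalso; move: Hlast'; rewrite El Hms0 /m0 => -[_ h].
  have : (kk * b)%N = 0%N by lia.
  move/eqP; rewrite muln_eq0; case/orP => /eqP; lia.
exfalso.
apply: (@seq_arith l'.+2 (fun i => (f i).1.1) (fun i => ((f i).1.2)%:Z)
          (fun i => nth m0 ms i) d1 d2 a b kk).
- by [].
- by move=> i hi; case: (Hf i ltac:(rewrite El; exact hi)).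
- by move=> i hi; case: (Hf i ltac:(rewrite El; exact hi)) => _ h _ _ _; lia.
- by move=> i hi; case: (Hf i ltac:(rewrite El; exact hi)).
- by move=> i hi; case: (Hf i ltac:(rewrite El; exact hi)).
- move=> i hi /=.
  have hi1 : (i.+1 < size tau)%N by rewrite El.
  have hi0 : (i < size tau)%N by apply: ltnW.
  case: (Hf i hi0) => _ _ Hmi Hdi [hs Hqi].
  case: (Hf i.+1 hi1) => _ _ _ _ [hs' Hqi'].
  have hsrt : nth 0 tau i < nth 0 tau i.+1 by exact: (sortedP 0 Hsort) i hi1.
  have hneg1 := Htneg _ hi1.
  have hneg0 := Htneg _ hi0.
  have Hp := Hpiece i.+1 (nth 0 tau i.+1) (nth 0 tau i) (ltnW hi1).
  have Hp' : beta (nth 0 tau i.+1) =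
     ((beta (nth 0 tau i)).1 - (nth 0 tau i.+1 - nth 0 tau i) * (nth m0 ms i.+1).1%:~R,
      (beta (nth 0 tau i)).2 - (nth 0 tau i.+1 - nth 0 tau i) * (nth m0 ms i.+1).2%:~R).
    apply: Hp; split => /=.
    - exact: ltW.
    - by right; apply: ltW.
    - by right.
    - exact: ltW.
    - by right.
    - by right; apply: ltW.
  rewrite Hqi Hqi' in Hp'; case: Hp' => e1 e2.
  have eD : det (f i).1.1 (nth m0 ms i) = det (f i).1.1 (nth m0 ms i.+1)
    by rewrite Hmi /det /=; ring.
  rewrite eD in Hdi *.
  have ht : 0 < nth 0 tau i.+1 - nth 0 tau i by rewrite subr_gt0.
  have [h1 h2] := @geo R _ _ _ _ _ _ hs hs' ht Hdi e1 e2.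
  exact: h1.
- move=> i hi /=.
  have hi1 : (i.+1 < size tau)%N by rewrite El.
  have hi0 : (i < size tau)%N by apply: ltnW.
  case: (Hf i hi0) => _ _ Hmi Hdi [hs Hqi].
  case: (Hf i.+1 hi1) => _ _ _ _ [hs' Hqi'].
  have hsrt : nth 0 tau i < nth 0 tau i.+1 by exact: (sortedP 0 Hsort) i hi1.
  have hneg1 := Htneg _ hi1.
  have hneg0 := Htneg _ hi0.
  have Hp := Hpiece i.+1 (nth 0 tau i.+1) (nth 0 tau i) (ltnW hi1).
  have Hp' : beta (nth 0 tau i.+1) =
     ((beta (nth 0 tau i)).1 - (nth 0 tau i.+1 - nth 0 tau i) * (nth m0 ms i.+1).1%:~R,
      (beta (nth 0 tau i)).2 - (nth 0 tau i.+1 - nth 0 tau i) * (nth m0 ms i.+1).2%:~R).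
    apply: Hp; split => /=.
    - exact: ltW.
    - by right; apply: ltW.
    - by right.
    - exact: ltW.
    - by right.
    - by right; apply: ltW.
  rewrite Hqi Hqi' in Hp'; case: Hp' => e1 e2.
  have eD : det (f i).1.1 (nth m0 ms i) = det (f i).1.1 (nth m0 ms i.+1)
    by rewrite Hmi /det /=; ring.
  rewrite eD in Hdi *.
  have ht : 0 < nth 0 tau i.+1 - nth 0 tau i by rewrite subr_gt0.
  have [h1 h2] := @geo R _ _ _ _ _ _ hs hs' ht Hdi e1 e2.
  exact: h2.
- by [].
- by rewrite -El Hlast' !PoszM.
- lia.
- lia.
- lia.
- lia.
- lia.
- have p1 : (0 < kk * b ^ 2)%N by rewrite muln_gt0 expn_gt0 hb /=; lia.
  have p2 : (0 < kk * a * b + 1)%N by rewrite addn1.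
  move: Hc.
  rewrite (frac_le _ _ _ _ hd2 p1) (frac_lt _ _ _ _ hb hd2).
  rewrite (frac_le _ _ _ _ p2 hd2) (frac_lt _ _ _ _ hd2 hb).
  rewrite -!mulnn.
  case=> [[h1 h2]|[h1 h2]]; [left|right]; split; nia.
Qed.
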